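(* There is an absolute constant $c>0$ such that the following holds. Let $n\ge5$ be odd, $k=\frac{n-3}{2}$, $G=(V,E)=K_n$, let $C=(v_1,\dots,v_{2k+1})$ be a cycle of length $n-2$ in $G$ with $s,t$ the two vertices not on $C$, and let $F$ be the facet of $P_{(\widehat G,\widehat R)}$ defined by the canonical transformation of the $C$-induced constraint $x_{\{s,t\}}+k\cdot x(\delta(V(C)))+\sum_{e\in E[V\setminus\{s,t\}]}\ell(e)x_e\ge 2k+1$. Then there exist $\widehat a\in\mathbb{Z}^{\widehat E}$ and $\widehat b\in\mathbb{Z}$ such that $F=\{y\in P_{(\widehat G,\widehat R)}\colon \widehat a^\top y=\widehat b\}$ and $|\{\widehat a_{\widehat e}\colon\widehat e\in\widehat E\}|\le c\,n^{2/3}$.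
   Context: $\delta(V(C))$ is the set of edges with exactly one endpoint on $C$, $E[S]$ the set of edges with both endpoints in $S$, $x(S)=\sum_{e\in S}x_e$; for $i\ne j$, $\ell(\{v_i,v_j\})=|j-i|$ if $|j-i|$ is odd and $2k+1-|j-i|$ otherwise. The bipartite graph $\widehat G=(\widehat V,\widehat E)$ has vertex set $\{v^+\colon v\in V\}\cup\{v^-\colon v\in V\}$ and edges $\{v^+,v^-\}$ for $v\in V$ and $\{u^+,v^-\},\{u^-,v^+\}$ for each $\{u,v\}\in E$; red edges $\widehat R=\widehat E\setminus\{\{v^+,v^-\}\colon v\in V\}$. $P_{(\widehat G,\widehat R)}$ is the convex hull of incidence vectors of perfect matchings $M$ of $\widehat G$ with $|M\cap\widehat R|$ odd. The canonical transformation of $\sum_{e\in E}a_ex_e\ge b$ is $\sum_{\{u,v\}\in E}a_{\{u,v\}}(y_{\{u^+,v^-\}}+y_{\{u^-,v^+\}})\ge b$. (This canonical transformation defines a facet of $P_{(\widehat G,\widehat R)}$.) *)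

(* Defs.v *)
From HB Require Import structures.
From mathcomp Require Import all_boot all_order all_algebra.
From mathcomp Require Import reals exp.
Set Implicit Arguments. Unset Strict Implicit. Unset Printing Implicit Defensive.
Import Order.TTheory GRing.Theory Num.Theory.
Local Open Scope ring_scope.

(* G = K_n on vertex set 'I_n.  The cycle C = (v_1,...,v_{2k+1}) is given by an
   injective map v : 'I_(n-2) -> 'I_n (0-based: v i is v_{i+1}). *)

Definition kk (n : nat) : nat := (n - 3)./2.

Section Constraint.
Variables (n : nat) (v : 'I_(n-2) -> 'I_n).

Definition onC (x : 'I_n) : bool := x \in codom v.

Definition cidx (x : 'I_n) : nat := odflt 0%N (omap val [pick i | v i == x]).

Definition ell (x y : 'I_n) : nat :=
  let d := `|(cidx x)%:Z - (cidx y)%:Z|%N in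
  if odd d then d else ((2 * kk n).+1 - d)%N.

(* coefficient of x_{ {x,y} } (x <> y) in the C-induced constraint
   x_{s,t} + k x(delta(V(C))) + sum_{e in E[V\{s,t}]} l(e) x_e >= 2k+1.
   Note V \ {s,t} = V(C); an edge with no endpoint on C is {s,t}. *)
Definition cind_coef (x y : 'I_n) : int :=
  if onC x && onC y then (ell x y)%:Z
  else if onC x || onC y then (kk n)%:Z
  else 1.

Definition cind_rhs : int := ((2 * kk n).+1)%:Z.
End Constraint.

(* Hat vertices: 'I_n * bool, (u,true) = u^+,
   (u,false) = u^-.  \hat E is encoded by 'I_n * 'I_n, the pair (u,w)
   standing for the edge {u^+, w^-}; (u,u) are the edges {u^+,u^-} and the
   pairs (u,w), u <> w, are the edges {u^+,w^-} coming from {u,w} in E(K_n)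
   (both {u^+,w^-} and {u^-,w^+} = (w,u) occur). *)
Definition hedge (n : nat) := ('I_n * 'I_n)%type.

Definition hends (n : nat) (e : hedge n) : {set 'I_n * bool} :=
  [set (e.1, true); (e.2, false)].

Definition red (n : nat) (e : hedge n) : bool := e.1 != e.2.

Definition perfect_matching (n : nat) (M : {set hedge n}) : Prop :=
  forall p : 'I_n * bool, #|[set e in M | p \in hends e]| = 1%N.

Definition odd_red_pm (n : nat) (M : {set hedge n}) : Prop :=
  perfect_matching M /\ odd #|[set e in M | red e]|.

Definition in_P (R : realFieldType) (n : nat) (y : hedge n -> R) : Prop :=
  exists lam : {set hedge n} -> R,
    [/\ forall M, 0 <= lam M,
        forall M, lam M != 0 -> odd_red_pm M,
        \sum_(M : {set hedge n}) lam M = 1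
      & forall e, y e = \sum_(M : {set hedge n}) lam M * (e \in M)%:R].

Definition hdot (R : realFieldType) (n : nat) (a : hedge n -> int)
  (y : hedge n -> R) : R := \sum_(e : hedge n) (a e)%:~R * y e.

(* canonical transformation: sum_{u,v} a_{uv}(y_{u+v-} + y_{u-v+}) *)
Definition canon (n : nat) (a : 'I_n -> 'I_n -> int) (e : hedge n) : int :=
  if e.1 == e.2 then 0 else a e.1 e.2.

Definition ndistinct (n : nat) (a : hedge n -> int) : nat :=
  size (undup (codom a)).

(* Main.v *)
Require Import Defs.
From HB Require Import structures.
From mathcomp Require Import all_boot all_order all_algebra.
From mathcomp Require Import reals exp.
From mathcomp Require Import zify ring lra.
Import Order.TTheory GRing.Theory Num.Theory.
Local Open Scope ring_scope.

Definition zr (N : nat) : seq int := [seq (i%:Z - N%:Z) | i <- iota 0 (2*N).+1].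

Lemma size_zr N : size (zr N) = (2 * N).+1.
Proof. by rewrite size_map size_iota. Qed.

Lemma zrP N (z : int) : `|z| <= N%:Z -> z \in zr N.
Proof.
move=> h; apply/mapP; exists (absz (z + N%:Z)).
  rewrite mem_iota /=; lia.
lia.
Qed.

Section Cyc.
Variables (B m : nat).
Hypothesis B0 : (0 < B)%N.

Definition U := (m %/ (B * B))%N.
Definition g (i : nat) : int := B%:Z * ((B * (i %/ (B*B)))%:Z - ((i %/ B) %% B)%:Z).
Definition T1 := [seq (2*B)%:Z * u + w | u <- zr B.-1, w <- zr B.-1].
Definition T2 := [seq (2*B*B)%:Z * u + w | u <- zr U, w <- zr B.-1].
Definition GV := [seq B%:Z * ((B * u1)%:Z - u0%:Z) | u1 <- iota 0 U.+1, u0 <- iota 0 B].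

Lemma decomp i : i = (B * (B * (i %/ (B*B)) + (i %/ B) %% B) + i %% B)%N.
Proof.
rewrite divnMA {1}(divn_eq i B) {1}(divn_eq (i %/ B) B); ring.
Qed.

Lemma decompZ i : i%:Z = B%:Z * (B%:Z * (i %/ (B*B))%:Z + ((i %/ B) %% B)%:Z) + (i %% B)%:Z.
Proof. by rewrite {1}(decomp i) !PoszD !PoszM. Qed.

Lemma p1le i : (i < m)%N -> (i %/ (B*B) <= U)%N.
Proof. move=> h; apply: leq_div2r; exact: ltnW. Qed.

Lemma gGV i : (i < m)%N -> g i \in GV.
Proof.
move=> h; apply: (allpairs_f (fun u1 u0 : nat => B%:Z * ((B * u1)%:Z - u0%:Z))).
  by rewrite mem_iota /= add0n ltnS p1le.
by rewrite mem_iota /= add0n ltn_mod.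
Qed.

Lemma XT1 i j : j%:Z - i%:Z + g i - g j \in T1.
Proof.
have ri := ltn_pmod i B0; have rj := ltn_pmod j B0.
have pi := ltn_pmod (i %/ B) B0; have pj := ltn_pmod (j %/ B) B0.
have -> : j%:Z - i%:Z + g i - g j =
   (2*B)%:Z * (((j %/ B) %% B)%:Z - ((i %/ B) %% B)%:Z) + ((j %% B)%:Z - (i %% B)%:Z).
  rewrite /g (decompZ i) (decompZ j) PoszM !PoszM; ring.
apply: (allpairs_f (fun u w : int => (2*B)%:Z * u + w)); apply: zrP; lia.
Qed.

Lemma YT2 i j : (i < m)%N -> (j < m)%N -> i%:Z - j%:Z + g i - g j \in T2.
Proof.
move=> hi hj.
have ri := ltn_pmod i B0; have rj := ltn_pmod j B0.
have pi := p1le _ hi; have pj := p1le _ hj.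
have -> : i%:Z - j%:Z + g i - g j =
   (2*B*B)%:Z * ((i %/ (B*B))%:Z - (j %/ (B*B))%:Z) + ((i %% B)%:Z - (j %% B)%:Z).
  rewrite /g (decompZ i) (decompZ j) !PoszM; ring.
apply: (allpairs_f (fun u w : int => (2*B*B)%:Z * u + w)); apply: zrP.
  move: pi pj; generalize (i %/ (B*B))%N (j %/ (B*B))%N U => a b c; lia.
lia.
Qed.

End Cyc.
Lemma powB (R : realType) (B n : nat) : (B ^ 3 <= n)%N -> (B ^ 2)%:R <= powR (n%:R : R) (2/3).
Proof.
move=> h.
have e : (B ^ 2)%:R = powR ((B ^ 3)%:R : R) (2/3).
  have b0 : (0 : R) <= B%:R by rewrite ler0n.
  rewrite !natrX -(powR_mulrn 3 b0) -powRrM.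
  have -> : (3%:R * (2/3) : R) = 2%:R by field.
  by rewrite powR_mulrn.
rewrite e; apply: ge0_ler_powR => //; first by lra.
- by rewrite nnegrE ler0n.
- by rewrite nnegrE ler0n.
- by rewrite ler_nat.
Qed.

Section Count.
Variables (B m : nat) (k : int).
Definition S : seq int :=
  [:: 0; 1] ++ [seq k + z | z <- GV B m] ++ [seq k - z | z <- GV B m] ++
  [seq c + z | c <- [:: 0; m%:Z], z <- T1 B ++ T2 B m].

Lemma size_S : size S = (2 + 2 * (U B m).+1 * B + 2 * (size (T1 B) + size (T2 B m)))%N.
Proof.
rewrite /S /GV; generalize (T1 B) (T2 B m) => t1 t2.
rewrite !size_cat !size_map !size_allpairs size_cat !size_iota /=.
lia.
Qed.

Lemma memS_cyc c z : c \in [:: 0; m%:Z] -> z \in T1 B ++ T2 B m -> c + z \in S.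
Proof.
move=> hc hz; rewrite /S mem_cat; apply/orP; right; rewrite mem_cat; apply/orP; right.
rewrite mem_cat; apply/orP; right.
by apply/allpairsP; exists (c, z).
Qed.

Lemma memS_kp z : z \in GV B m -> k + z \in S.
Proof. move=> h; rewrite /S !mem_cat; apply/orP; right; apply/orP; left; exact: map_f. Qed.
Lemma memS_km z : z \in GV B m -> k - z \in S.
Proof. move=> h; rewrite /S !mem_cat; apply/orP; right; apply/orP; right; apply/orP; left.
  exact: (map_f (fun z => k - z)). Qed.
Lemma memS0 : 0 \in S. Proof. by rewrite /S !mem_cat inE eqxx. Qed.
Lemma memS1 : 1 \in S. Proof. by rewrite /S !mem_cat !inE eqxx orbT. Qed.
End Count.

Lemma cube_root m : exists B, (B^3 <= m < (B.+1)^3)%N.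
Proof.
elim: m => [|m [B /andP[h1 h2]]]; first by exists 0%N.
case: (leqP (B.+1 ^ 3) m.+1) => h.
  exists B.+1; rewrite h /=; move: h2 h; rewrite !expnS expn0; nia.
by exists B; rewrite h andbT; apply: leqW.
Qed.

Lemma cidx_lt n (v : 'I_(n-2) -> 'I_n) x : (4 < n)%N -> (cidx v x < n - 2)%N.
Proof. rewrite /cidx; case: pickP => [i _|_] /= h; [exact: ltn_ord | lia]. Qed.

Lemma kkE n : odd n -> (5 <= n)%N -> ((2 * kk n).+1 = n - 2)%N.
Proof.
move=> o h; rewrite /kk.
have := odd_double_half (n - 3); rewrite oddB; last by lia.
rewrite o /= -muln2.
generalize ((n - 3)./2) => q; lia.
Qed.

Lemma pm_sum1 (R : realType) n (M : {set hedge n}) (f : 'I_n -> R) :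
  perfect_matching M -> \sum_(e in M) f e.1 = \sum_u f u.
Proof.
move=> pm; rewrite (partition_big (fun e : hedge n => e.1) xpredT) //=.
apply: eq_bigr => u _.
rewrite (eq_bigr (fun _ => f u)); last by move=> e /andP[_ /eqP ->].
rewrite sumr_const.
have := pm (u, true).
have -> : [set e in M | (u, true) \in hends e] = [set e in M | e.1 == u].
  by apply/setP => e; rewrite /hends !inE /= !xpair_eqE /= andbT andbF orbF eq_sym.
move=> h; rewrite -[RHS](mulr1n (f u)); congr (_ *+ _); rewrite -h.
by apply: eq_card => e; rewrite inE.
Qed.

Lemma pm_sum2 (R : realType) n (M : {set hedge n}) (f : 'I_n -> R) :
  perfect_matching M -> \sum_(e in M) f e.2 = \sum_u f u.
Proof.
move=> pm; rewrite (partition_big (fun e : hedge n => e.2) xpredT) //=.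
apply: eq_bigr => u _.
rewrite (eq_bigr (fun _ => f u)); last by move=> e /andP[_ /eqP ->].
rewrite sumr_const.
have := pm (u, false).
have -> : [set e in M | (u, false) \in hends e] = [set e in M | e.2 == u].
  by apply/setP => e; rewrite /hends !inE /= !xpair_eqE /= andbF andbT eq_sym.
move=> h; rewrite -[RHS](mulr1n (f u)); congr (_ *+ _); rewrite -h.
by apply: eq_card => e; rewrite inE.
Qed.

Lemma inP_zero (R : realType) n (y : hedge n -> R) (f : 'I_n -> R) :
  in_P y -> \sum_e (f e.1 - f e.2) * y e = 0.
Proof.
case=> lam [h0 hpm h1 hy].
under eq_bigr => e _ do rewrite hy big_distrr /=.
rewrite exchange_big /=; apply: big1 => M _.
case: (eqVneq (lam M) 0) => [->|nz]; first by apply: big1 => e _; rewrite mul0r mulr0.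
have [pm _] := hpm M nz.
rewrite (eq_bigr (fun e => lam M * ((e \in M)%:R * (f e.1 - f e.2)))); last first.
  by move=> e _; ring.
rewrite -big_distrr /=.
have -> : \sum_e (e \in M)%:R * (f e.1 - f e.2) = \sum_(e in M) (f e.1 - f e.2).
  rewrite [RHS]big_mkcond; apply: eq_bigr => e _; case: (e \in M); by rewrite ?mul1r ?mul0r.
by rewrite sumrB pm_sum1 // pm_sum2 // subrr mulr0.
Qed.

Theorem theorem15 (R : realType) :
  exists c : R, 0 < c /\
    forall n : nat, (5 <= n)%N -> odd n ->
    forall v : 'I_(n - 2) -> 'I_n, injective v ->
    exists (a : hedge n -> int) (b : int),
      (forall y : hedge n -> R,
         (in_P y /\ hdot (canon (cind_coef v)) y = (cind_rhs n)%:~R)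
         <-> (in_P y /\ hdot a y = b%:~R))
      /\ (ndistinct a)%:R <= c * powR (n%:R) (2 / 3).
Proof.
exists 100; split; first lra.
move=> n n5 nodd v vinj.
have [B /andP[hB1 hB2]] := cube_root (n - 2).
have B0 : (0 < B)%N by move: hB2; case: B {hB1} => //; rewrite !expnS expn0; lia.
pose alpha (u : 'I_n) : int := if onC v u then g B (cidx v u) else 0.
pose a := fun e : hedge n => canon (cind_coef v) e + alpha e.1 - alpha e.2.
exists a, (cind_rhs n).
have hd : forall y : hedge n -> R, in_P y -> hdot a y = hdot (canon (cind_coef v)) y.
  move=> y hy; rewrite /hdot.
  have := @inP_zero R n y (fun u => (alpha u)%:~R) hy.
  move=> z; rewrite -[RHS]addr0 -[X in _ + X]z -big_split /=; apply: eq_bigr => e _.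
  rewrite /a intrB intrD; ring.
split.
  by move=> y; split => -[hy he]; split => //; rewrite ?hd // -?hd.
set m := (n - 2)%N.
have memS : forall e, a e \in S B m (kk n)%:Z.
  case=> x y; rewrite /a /canon /=.
  case: eqP => [->|ne]; first by rewrite add0r subrr memS0.
  have hi := cidx_lt _ v x n5; have hj := cidx_lt _ v y n5.
  rewrite /cind_coef /alpha.
  case hx: (onC v x); case hy: (onC v y) => /=.
  - rewrite /ell kkE //.
    move: hi hj; rewrite -/m; set i := cidx v x; set j := cidx v y => hi hj.
    case: (leqP i j) => hij.
    + have -> : `|i%:Z - j%:Z|%N = (j - i)%N by lia.
      case: ifP => _.
      * have -> : (j - i)%N%:Z + g B i - g B j = 0 + (j%:Z - i%:Z + g B i - g B j) by lia.
        by apply: memS_cyc; [rewrite !inE eqxx ?orbT | rewrite mem_cat (@XT1 B B0 i j)].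
      * have -> : (m - (j - i))%N%:Z + g B i - g B j = m%:Z + (i%:Z - j%:Z + g B i - g B j) by lia.
        by apply: memS_cyc; [rewrite !inE eqxx ?orbT | rewrite mem_cat (@YT2 B m B0 i j hi hj) orbT].
    + have -> : `|i%:Z - j%:Z|%N = (i - j)%N by lia.
      case: ifP => _.
      * have -> : (i - j)%N%:Z + g B i - g B j = 0 + (i%:Z - j%:Z + g B i - g B j) by lia.
        by apply: memS_cyc; [rewrite !inE eqxx ?orbT | rewrite mem_cat (@YT2 B m B0 i j hi hj) orbT].
      * have -> : (m - (i - j))%N%:Z + g B i - g B j = m%:Z + (j%:Z - i%:Z + g B i - g B j) by lia.
        by apply: memS_cyc; [rewrite !inE eqxx ?orbT | rewrite mem_cat (@XT1 B B0 i j)].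
  - by rewrite subr0; apply: memS_kp; apply: (@gGV B m B0).
  - by rewrite addr0; apply: memS_km; apply: (@gGV B m B0).
  - by rewrite subr0 addr0 memS1.
have hcount : (ndistinct a <= 100 * B ^ 2)%N.
  apply: (@leq_trans (size (S B m (kk n)%:Z))).
    apply: uniq_leq_size; first exact: undup_uniq.
    move=> z; rewrite mem_undup => /codomP [e ->]; exact: memS.
  rewrite size_S /T1 /T2 !size_allpairs !size_zr /U.
  have := leq_trunc_div m (B * B).
  move: hB2 B0; rewrite -/m !expnS expn0; generalize (m %/ (B * B))%N => u; nia.
apply: (le_trans (y := (100 * B ^ 2)%N%:R)); first by rewrite ler_nat.
rewrite natrM mulrC [X in _ <= X]mulrC; apply: ler_pM; rewrite ?ler0n ?lexx //.
by apply: powB; apply: (leq_trans hB1); lia.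
Qed.
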